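(* Let $n\ge 2$ and $q\ge 2$ be integers, $E_q=\{0,1,\dots,q-1\}$, and let $A\subseteq E_q^n$ be a subset such that $q$ divides $|A|$ and $A$ has uniform column distribution, i.e. for every coordinate $i$ at which the elements of $A$ do not all agree, each value $b\in E_q$ occurs as the $i$-th coordinate of exactly $|A|/q$ elements of $A$. Then $A$ is metrically dense: $R(A)\le R(B)$ for every subset $B\subseteq E_q^n$ that is isometric to $A$.
   Context: $E_q^n$ is the set of all $n$-tuples over $E_q$ with Hamming distance $d_H(x,y)=|\{i: x_i\neq y_i\}|$. For $A\subseteq E_q^n$, $R(A)$ is the number of coordinates $i$ such that the $i$-th coordinates of the elements of $A$ are not all equal (the number of non-constant columns of the matrix whose rows are the elements of $A$). Two subsets $A,B\subseteq E_q^n$ are isometric if there is a bijection $\phi:A\to B$ with $d_H(\phi(x),\phi(y))=d_H(x,y)$ for all $x,y\in A$. *)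

(* Defs.v *)
From mathcomp Require Import all_boot.
Set Implicit Arguments. Unset Strict Implicit. Unset Printing Implicit Defensive.

Definition word (n q : nat) := {ffun 'I_n -> 'I_q}.

Definition dH (n q : nat) (x y : word n q) : nat := #|[set i | x i != y i]|.

Definition nonconst_col (n q : nat) (A : {set word n q}) (i : 'I_n) : bool :=
  [exists x in A, exists y in A, x i != y i].

Definition Rk (n q : nat) (A : {set word n q}) : nat :=
  #|[set i | nonconst_col A i]|.

Definition isometric (n q : nat) (A B : {set word n q}) : Prop :=
  exists phi : word n q -> word n q,
    [/\ {in A &, injective phi}, phi @: A = B &
        {in A &, forall x y, dH (phi x) (phi y) = dH x y}].

Definition uniform_cols (n q : nat) (A : {set word n q}) : Prop :=
  forall i : 'I_n, nonconst_col A i ->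
    forall b : 'I_q, #|[set x in A | x i == b]| = #|A| %/ q.

Definition metrically_dense (n q : nat) (A : {set word n q}) : Prop :=
  forall B : {set word n q}, isometric A B -> Rk A <= Rk B.

(* Main.v *)
Require Import Defs.
From mathcomp Require Import all_boot.
From mathcomp Require Import zify.
Set Implicit Arguments. Unset Strict Implicit.

Section Aux.
Variables n q : nat.
Implicit Types S : {set word n q}.

Definition colsum S (i : 'I_n) := \sum_(x in S) \sum_(y in S) (x i != y i).
Definition colE S (i : 'I_n) := \sum_(x in S) \sum_(y in S) (x i == y i).
Definition cnt S (i : 'I_n) (b : 'I_q) := \sum_(x in S) (x i == b).
Definition Dsum S := \sum_(x in S) \sum_(y in S) dH x y.

Lemma colsumE S i : colsum S i + colE S i = #|S| ^ 2.
Proof.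
rewrite /colsum /colE -big_split /= expnS expn1 -sum_nat_const.
apply: eq_bigr => x _; rewrite -big_split /= -sum1_card.
by apply: eq_bigr => y _; case: eqP.
Qed.

Lemma ind_sum (a c : 'I_q) : (a == c) = \sum_b ((a == b) * (c == b)) :> nat.
Proof.
rewrite (bigD1 a) //= eqxx mul1n big1 ?addn0; first by rewrite eq_sym.
by move=> b /negbTE nb; rewrite eq_sym nb.
Qed.

Lemma colE_sq S i : colE S i = \sum_b cnt S i b ^ 2.
Proof.
rewrite /colE /cnt.
have -> : \sum_b (\sum_(x in S) (x i == b)) ^ 2 =
  \sum_b \sum_(x in S) \sum_(y in S) ((x i == b) * (y i == b)).
  apply: eq_bigr => b _; rewrite -mulnn big_distrl /=.
  by apply: eq_bigr => x _; rewrite big_distrr.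
rewrite [RHS]exchange_big /=; apply: eq_bigr => x _.
rewrite [RHS]exchange_big /=; apply: eq_bigr => y _.
exact: ind_sum.
Qed.

Lemma card_cnt S i : #|S| = \sum_b cnt S i b.
Proof.
rewrite /cnt exchange_big /= -sum1_card; apply: eq_bigr => x _.
rewrite (bigD1 (x i)) //= eqxx big1 // => b /negbTE nb; by rewrite eq_sym nb.
Qed.

Lemma CS (c : 'I_q -> nat) : (\sum_b c b) ^ 2 <= q * \sum_b c b ^ 2.
Proof.
have E1 : (\sum_b c b) ^ 2 = \sum_b \sum_b' (c b * c b').
  by rewrite -mulnn big_distrl /=; apply: eq_bigr => b _; rewrite big_distrr.
have E2 : \sum_b \sum_(b' : 'I_q) (c b ^ 2 + c b' ^ 2)
          = q * \sum_b c b ^ 2 + q * \sum_b c b ^ 2.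
  under eq_bigr => b _ do rewrite big_split /= sum_nat_const card_ord.
  by rewrite big_split /= -big_distrr /= sum_nat_const card_ord.
have L : 2 * (\sum_b \sum_(b' : 'I_q) (c b * c b'))
          <= \sum_b \sum_(b' : 'I_q) (c b ^ 2 + c b' ^ 2).
  rewrite big_distrr /=; apply: leq_sum => b _.
  rewrite big_distrr /=; apply: leq_sum => b' _.
  exact: nat_Cauchy.
rewrite E1 -(leq_pmul2l (_ : 0 < 2)) //; apply: (leq_trans L); rewrite E2 mul2n addnn. exact: leqnn.
Qed.

Lemma key S i : q * colsum S i <= (q - 1) * #|S| ^ 2.
Proof.
have H1 := colsumE S i.
have H2 : #|S| ^ 2 <= q * colE S i by rewrite colE_sq {1}(card_cnt S i) CS.
have H3 : q * colsum S i + q * colE S i = q * #|S| ^ 2 by rewrite -mulnDr H1.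
rewrite mulnBl mul1n; lia.
Qed.

Lemma const_col S i : ~~ nonconst_col S i -> colsum S i = 0.
Proof.
move=> H; apply: big1 => x xS; apply: big1 => y yS.
case: eqP => //= ne; exfalso; move/negP: H; apply.
apply/existsP; exists x; rewrite xS /=; apply/existsP; exists y; rewrite yS /=.
by apply/eqP.
Qed.

Lemma DsumE S : Dsum S = \sum_(i in [set i | nonconst_col S i]) colsum S i.
Proof.
have -> : Dsum S = \sum_i colsum S i.
  rewrite /Dsum /colsum.
  under eq_bigr => x _ do under eq_bigr => y _ do
    rewrite /dH -sum1_card big_mkcond /=.
  under eq_bigr => x _ do rewrite exchange_big /=.
  rewrite exchange_big /=; apply: eq_bigr => i _.
  apply: eq_bigr => x _; apply: eq_bigr => y _; rewrite inE; by case: ifP.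
rewrite [RHS]big_mkcond /=; apply: eq_bigr => i _; rewrite inE.
by case: ifP => // /negbT /const_col.
Qed.

End Aux.

Theorem mainTheorem2 (n q : nat) (A : {set word n q}) :
  2 <= n -> 2 <= q -> q %| #|A| -> uniform_cols A -> metrically_dense A.
Proof.
move=> _ q2 /dvdnP [k Hk] U B [phi [inj HB iso]].
have cardB : #|B| = #|A| by rewrite -HB card_in_imset.
have DAB : Dsum B = Dsum A.
  rewrite /Dsum -HB (big_imset _ inj) /=; apply: eq_bigr => x xA.
  rewrite (big_imset _ inj) /=; apply: eq_bigr => y yA; exact: iso.
set M := (q - 1) * #|A| ^ 2.
have EA : q * Dsum A = Rk A * M.
  rewrite DsumE big_distrr /= /Rk -sum_nat_const; apply: eq_bigr => i.
  rewrite inE => nc.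
  have Hc : forall b, cnt A i b = k.
    move=> b.
    have -> : cnt A i b = #|[set x in A | x i == b]|.
      rewrite /cnt -sum1_card [RHS]big_mkcond [LHS]big_mkcond /=.
      apply: eq_bigr => x _; rewrite inE; by case: (x \in A); case: (x i == b).
    rewrite (U i nc b) Hk mulnK //; lia.
  have H1 := colsumE A i.
  have H2 : colE A i = q * k ^ 2.
    by rewrite colE_sq; under eq_bigr => b _ do rewrite Hc; rewrite sum_nat_const card_ord.
  have H3 : q * colsum A i + q * colE A i = q * #|A| ^ 2 by rewrite -mulnDr H1.
  rewrite /M mulnBl mul1n; rewrite H2 Hk in H3 *; nia.
have EB : q * Dsum B <= Rk B * M.
  rewrite DsumE big_distrr /= /Rk -sum_nat_const; apply: leq_sum => i _.
  by rewrite /M -cardB key.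
have [A0|Apos] := posnP #|A|.
  suff -> : Rk A = 0 by [].
  rewrite /Rk; apply/eqP; rewrite cards_eq0; apply/eqP.
  apply/setP => i; rewrite !inE /nonconst_col; apply/negbTE/existsP => -[x /andP [xA _]].
  by move/eqP: A0; rewrite cards_eq0 => /eqP A0; rewrite A0 inE in xA.
have Mpos : 0 < M by rewrite /M muln_gt0 expn_gt0 Apos subn_gt0 q2.
by rewrite -(leq_pmul2r Mpos) -EA -DAB.
Qed.
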